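(* Let $n \ge 2$ and $X_0, Y_0 \in \mathrm{S}^{n-1}$. Construct a pair of processes $\{(X_t, Y_t)\}_{t \ge 0}$ by applying, at every step $t \ge 0$ and conditionally on $(X_t, Y_t)$, the proportional coupling described in the context. Then for every $t \ge 0$, $$\mathbb{E}\Big[\sum_{i=1}^n \big(X_t[i]^2 - Y_t[i]^2\big)^2\Big] \le 2\Big(1 - \frac{1}{2n}\Big)^t.$$
   Context: $\mathrm{S}^{n-1} = \{X \in \mathbb{R}^n : \sum_{i=1}^n X[i]^2 = 1\}$. For $1 \le i < j \le n$, $\theta \in [0,2\pi)$ and $X \in \mathrm{S}^{n-1}$, let $\mathrm{F}(i,j,\theta,X) \in \mathrm{S}^{n-1}$ be the vector obtained from $X$ by replacing $(X[i], X[j])$ with $(\cos(\theta)X[i] - \sin(\theta)X[j],\ \sin(\theta)X[i] + \cos(\theta)X[j])$ and leaving all other coordinates unchanged. (Kac's walk is $X_{t+1} = \mathrm{F}(i_t,j_t,\theta_t,X_t)$ with $(i_t,j_t)$ uniform among pairs $i<j$ and $\theta_t$ uniform on $[0,2\pi)$, all independent.) Proportional coupling of one step from $(X_t, Y_t)$: choose $1 \le i < j \le n$ uniformly among all pairs and $\theta \in [0,2\pi)$ uniformly, independently, and set $X_{t+1} = \mathrm{F}(i,j,\theta,X_t)$. Then choose $\varphi \in [0,2\pi)$ uniformly at random among all angles satisfying $X_{t+1}[i] = \sqrt{X_t[i]^2 + X_t[j]^2}\cos(\varphi)$ and $X_{t+1}[j] = \sqrt{X_t[i]^2 + X_t[j]^2}\sin(\varphi)$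 (the solution is unique unless $X_t[i]=X_t[j]=0$, in which case every angle qualifies). Then choose $\theta' \in [0,2\pi)$ uniformly among the angles satisfying $\mathrm{F}(i,j,\theta',Y_t)[i] = \sqrt{Y_t[i]^2 + Y_t[j]^2}\cos(\varphi)$ and $\mathrm{F}(i,j,\theta',Y_t)[j] = \sqrt{Y_t[i]^2 + Y_t[j]^2}\sin(\varphi)$, and set $Y_{t+1} = \mathrm{F}(i,j,\theta',Y_t)$. Each marginal process is then a copy of Kac's walk. *)

(* Defs.v *)
From HB Require Import structures.
From mathcomp Require Import all_boot all_order all_algebra.
From mathcomp Require Import all_classical all_reals all_analysis.
Set Implicit Arguments. Unset Strict Implicit. Unset Printing Implicit Defensive.
Import Order.TTheory GRing.Theory Num.Theory.
Local Open Scope ring_scope.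
Local Open Scope classical_set_scope.

Section Kac.
Variables (R : realType) (n : nat).

Definition vecR := 'I_n -> R.

Definition on_sphere (X : vecR) : Prop := \sum_(k < n) X k ^+ 2 = 1.

Definition rotF (i j : 'I_n) (th : R) (X : vecR) : vecR :=
  fun k => if k == i then cos th * X i - sin th * X j
           else if k == j then sin th * X i + cos th * X j
           else X k.

(* This is F(i,j,theta',Y) for every theta' solving the defining equations of the
   proportional coupling (unique theta' when Y[i],Y[j] not both 0; if both are 0
   every theta' qualifies and F(i,j,theta',Y) = Y). *)
Definition coupledY (i j : 'I_n) (c s : R) (Y : vecR) : vecR :=
  let r := Num.sqrt (Y i ^+ 2 + Y j ^+ 2) in
  fun k => if k == i then r * c else if k == j then r * s else Y k.

Local Open Scope ereal_scope.

Definition avg_angle (h : R -> \bar R) : \bar R :=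
  ((2 * pi)^-1)%:E * \int[lebesgue_measure]_(th in `[0%R, (2 * pi)%R[) h th.

Definition step_val (g : vecR -> vecR -> \bar R) (i j : 'I_n) (th : R)
  (X Y : vecR) : \bar R :=
  let X' := rotF i j th X in
  let rX := Num.sqrt (X i ^+ 2 + X j ^+ 2) in
  if rX == 0%R then
    (* every phi qualifies: phi uniform on [0,2pi) *)
    avg_angle (fun phi => g X' (coupledY i j (cos phi) (sin phi) Y))
  else
    (* phi is the unique angle with X'[i] = rX cos phi, X'[j] = rX sin phi *)
    g X' (coupledY i j (X' i / rX) (X' j / rX) Y).

(* One-step Markov operator of the proportional coupling:
   (K g)(X,Y) = E[ g(X_{t+1}, Y_{t+1}) | (X_t,Y_t) = (X,Y) ]. *)
Definition coupling_op (g : vecR -> vecR -> \bar R) : vecR -> vecR -> \bar R :=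
  fun X Y =>
    ((('C(n, 2))%:R)^-1)%:E *
      \sum_(i < n) \sum_(j < n | (i < j)%N) avg_angle (fun th => step_val g i j th X Y).

Definition coupled_expect (t : nat) (g : vecR -> vecR -> \bar R) (X0 Y0 : vecR)
  : \bar R := iter t coupling_op g X0 Y0.

Definition sqdist (X Y : vecR) : \bar R :=
  (\sum_(k < n) (X k ^+ 2 - Y k ^+ 2) ^+ 2)%:E.

End Kac.

(* Main.v *)
Require Import Defs.
From HB Require Import structures.
From mathcomp Require Import all_boot all_order all_algebra.
From mathcomp Require Import all_classical all_reals all_analysis measurable_realfun.
From mathcomp Require Import ring lra.
Import Order.TTheory GRing.Theory Num.Theory numFieldNormedType.Exports.
Local Open Scope ring_scope.

Section S.
Local Open Scope classical_set_scope.
Variable R : realType.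
Definition g1 (x : R) := cos x * cos x * cos x * cos x - 6 * (cos x * cos x) * (sin x * sin x) + sin x * sin x * sin x * sin x.
Definition g2 (x : R) := 4 * (cos x * cos x * cos x) * sin x - 4 * cos x * (sin x * sin x * sin x).

Ltac cont := repeat first [ exact: continuous_cos | exact: continuous_sin | exact: cvg_cst | exact: cvg_id | apply: cvgD | apply: cvgB | apply: cvgM | apply: cvgN ].

Lemma cont_f (a b c : R) : continuous (fun x => a + b * g1 x + c * g2 x).
Proof. move=> x; rewrite /g1 /g2. cont. Qed.
Lemma ftc_co (F f : R -> R) (a b : R) : a < b -> continuous f ->
  (forall x : R, is_derive x 1 F (f x)) ->
  (\int[@lebesgue_measure R]_(x in `[a, b[) (f x)%:E = (F b - F a)%:E)%E.
Proof.
move=> ab cf dF.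
rewrite integral_itv_bndo_bndc; last first.
  by apply/measurable_EFinP; apply: measurable_funS (continuous_measurable_fun cf).
have dFx x : derivable F x 1 by have [] := dF x.
have cF : continuous F.
  by move=> x; apply/differentiable_continuous; rewrite -derivable1_diffP.
rewrite (@continuous_FTC2 _ _ F) ?EFinB//.
- exact/continuous_subspaceT.
- split.
  + by move=> x _; exact: dFx.
  + by apply: cvg_at_right_filter; exact: cF.
  + by apply: cvg_at_left_filter; exact: cF.
- by move=> x _; rewrite derive1E derive_val.
Qed.
End S.

Arguments g1 {R}. Arguments g2 {R}. Arguments cont_f {R}. Arguments ftc_co {R}.
Section S2.
Local Open Scope classical_set_scope.
Variable R : realType.

Lemma der_trig (a b c x : R) :
  is_derive x 1 (fun y : R => a * y + b * (cos y ^+ 3 * sin y - cos y * sin y ^+ 3)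
     - c * (cos y ^+ 4 + sin y ^+ 4)) (a + b * g1 x + c * g2 x).
Proof.
rewrite (_ : (fun y : R => _) = a \*: (@id R) + b \*: ((@cos R) ^+ 3 * (@sin R) - (@cos R) * (@sin R) ^+ 3)
     - c \*: ((@cos R) ^+ 4 + (@sin R) ^+ 4)); last first.
  by apply/funext => y; rewrite /= !exprfctE.
apply: is_derive_eq.
rewrite /g1 /g2 /=.
rewrite !scaler1. rewrite /GRing.scale /= !exprfctE. ring. Qed.

Lemma int_trig (a b c : R) :
  (\int[@lebesgue_measure R]_(x in `[0%R, (2 * pi)%R[) (a + b * g1 x + c * g2 x)%:E
    = ((2 * pi) * a)%:E)%E.
Proof.
rewrite (ftc_co _ (fun x => a + b * g1 x + c * g2 x) 0 (2 * pi) _ (cont_f a b c) (der_trig a b c)).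
  congr (_%:E).
  rewrite mulr_natl cos2pi sin2pi cos0 sin0 /=.
  ring.
by rewrite mulr_gt0 // pi_gt0.
Qed.
End S2.

Arguments g1 {R}. Arguments g2 {R}.

Section S3.
Local Open Scope classical_set_scope.
Variable R : realType.

Lemma avg_trig (a b c : R) :
  avg_angle (fun th : R => (a + b * g1 th + c * g2 th)%:E) = a%:E.
Proof.
rewrite /avg_angle int_trig -EFinM; congr (_%:E).
have pi0 : (2 * pi : R) != 0 by rewrite mulf_neq0 // gt_eqF // pi_gt0.
by rewrite mulrA mulVf // mul1r.
Qed.

Lemma avg_ge0 (f : R -> \bar R) : (forall th, (0 <= f th)%E) -> (0 <= avg_angle f)%E.
Proof.
move=> f0; rewrite /avg_angle mule_ge0 //.
  by rewrite lee_fin invr_ge0 mulr_ge0 // pi_ge0.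
by apply: integral_ge0 => x _.
Qed.

Lemma avg_le (f g : R -> \bar R) : (forall th, (0 <= f th)%E) ->
  (forall th, (f th <= g th)%E) -> (avg_angle f <= avg_angle g)%E.
Proof.
move=> f0 fg; rewrite /avg_angle lee_wpmul2l //.
  by rewrite lee_fin invr_ge0 mulr_ge0 // pi_ge0.
have g0 th : (0 <= g th)%E by apply: le_trans (fg th).
rewrite ge0_integralE; last by move=> x _; first [exact: f0|exact: g0].
rewrite ge0_integralE; last by move=> x _; first [exact: f0|exact: g0].
apply: le_ereal_sup => _ [h hf <-]; exists h => //= x.
apply: le_trans (hf x) _.
by rewrite /patch; case: ifP.
Qed.
End S3.

Arguments g1 {R}. Arguments g2 {R}.

Section S4.
Variable R : realType.

Lemma quart_id (c s x y : R) :
  (c * x - s * y) ^+ 4 + (s * x + c * y) ^+ 4 =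
  3 / 4 * (x ^+ 2 + y ^+ 2) ^+ 2 * (c ^+ 2 + s ^+ 2) ^+ 2
  - ((x * y) ^+ 2 - ((x ^+ 2 - y ^+ 2) / 2) ^+ 2) *
      (c * c * c * c - 6 * (c * c) * (s * s) + s * s * s * s)
  - 2 * ((x ^+ 2 - y ^+ 2) / 2) * (x * y) *
      (4 * (c * c * c) * s - 4 * c * (s * s * s)).
Proof. by field. Qed.

Lemma quart_id2 (c s : R) :
  c ^+ 4 + s ^+ 4 = 3 / 4 * (c ^+ 2 + s ^+ 2) ^+ 2
   + 1 / 4 * (c * c * c * c - 6 * (c * c) * (s * s) + s * s * s * s).
Proof. by field. Qed.

Variable n : nat.

Lemma sum_split (f : 'I_n -> R) (i j : 'I_n) : i != j ->
  \sum_k f k = f i + f j + \sum_(k | (k != i) && (k != j)) f k.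
Proof.
move=> ij; rewrite (bigD1 i) //= (bigD1 j) /=; last by rewrite eq_sym.
by rewrite addrA.
Qed.

End S4.

Arguments g1 {R}. Arguments g2 {R}. Arguments sum_split {R n}.

Section S5.
Variable R : realType.
Variable n : nat.
Implicit Types (X Y Z W : 'I_n -> R).

Definition dd X Y : R := \sum_(k < n) (X k ^+ 2 - Y k ^+ 2) ^+ 2.

Lemma d_split Z W X Y (i j : 'I_n) : i != j ->
  (forall k, k != i -> k != j -> Z k = X k /\ W k = Y k) ->
  dd Z W = dd X Y - (X i ^+ 2 - Y i ^+ 2) ^+ 2 - (X j ^+ 2 - Y j ^+ 2) ^+ 2
     + (Z i ^+ 2 - W i ^+ 2) ^+ 2 + (Z j ^+ 2 - W j ^+ 2) ^+ 2.
Proof.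
move=> ij HZ; rewrite /dd (sum_split _ i j ij) [in RHS](sum_split _ i j ij).
rewrite (eq_bigr (fun k => (X k ^+ 2 - Y k ^+ 2) ^+ 2)); last first.
  by move=> k /andP[ki kj]; have [-> ->] := HZ k ki kj.
ring.
Qed.

Lemma sphere_split X (i j : 'I_n) : i != j ->
  \sum_(k < n) X k ^+ 2 = X i ^+ 2 + X j ^+ 2 + \sum_(k | (k != i) && (k != j)) X k ^+ 2.
Proof. by move=> ij; rewrite (sum_split _ i j ij). Qed.

Lemma sphere_same X Z (i j : 'I_n) : i != j ->
  (forall k, k != i -> k != j -> Z k = X k) ->
  Z i ^+ 2 + Z j ^+ 2 = X i ^+ 2 + X j ^+ 2 -> on_sphere X -> on_sphere Z.
Proof.
move=> ij HZ e; rewrite /on_sphere (sphere_split X i j ij) (sphere_split Z i j ij) e.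
have -> : \sum_(k | (k != i) && (k != j)) Z k ^+ 2 = \sum_(k | (k != i) && (k != j)) X k ^+ 2.
  by apply: eq_bigr => k /andP[ki kj]; rewrite HZ.
by [].
Qed.

Section rot.
Variables (i j : 'I_n) (ij : i != j).

Lemma rotF_i th X : rotF i j th X i = cos th * X i - sin th * X j.
Proof. by rewrite /rotF eqxx. Qed.
Lemma rotF_j th X : rotF i j th X j = sin th * X i + cos th * X j.
Proof. by rewrite /rotF eqxx eq_sym (negbTE ij). Qed.
Lemma rotF_k th X k : k != i -> k != j -> rotF i j th X k = X k.
Proof. by rewrite /rotF => /negbTE -> /negbTE ->. Qed.

Lemma cY_i c s Y : coupledY i j c s Y i = Num.sqrt (Y i ^+ 2 + Y j ^+ 2) * c.
Proof. by rewrite /coupledY eqxx. Qed.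
Lemma cY_j c s Y : coupledY i j c s Y j = Num.sqrt (Y i ^+ 2 + Y j ^+ 2) * s.
Proof. by rewrite /coupledY eqxx eq_sym (negbTE ij). Qed.
Lemma cY_k c s Y k : k != i -> k != j -> coupledY i j c s Y k = Y k.
Proof. by rewrite /coupledY => /negbTE -> /negbTE ->. Qed.

Lemma rotF_sphere th X : on_sphere X -> on_sphere (rotF i j th X).
Proof.
apply: (@sphere_same _ _ i j ij); first exact: rotF_k.
rewrite rotF_i rotF_j.
have := cos2Dsin2 th; set c := cos th; set s := sin th => cs.
rewrite -[RHS]mul1r -cs; ring.
Qed.

Lemma cY_sphere c s Y : c ^+ 2 + s ^+ 2 = 1 -> on_sphere Y ->
  on_sphere (coupledY i j c s Y).
Proof.
move=> cs; apply: (@sphere_same _ _ i j ij); first exact: cY_k.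
rewrite cY_i cY_j !exprMn sqr_sqrtr ?addr_ge0 ?sqr_ge0 //.
by rewrite -mulrDr cs mulr1.
Qed.
End rot.
End S5.

Section S6.
Variable R : realType.

Definition G1 (c s : R) := c * c * c * c - 6 * (c * c) * (s * s) + s * s * s * s.
Definition G2 (c s : R) := 4 * (c * c * c) * s - 4 * c * (s * s * s).

Lemma alg_rot (D x y p q c s S r : R) : c ^+ 2 + s ^+ 2 = 1 ->
  r ^+ 2 = x ^+ 2 + y ^+ 2 -> S ^+ 2 = p ^+ 2 + q ^+ 2 -> r != 0 ->
  D - (x ^+ 2 - p ^+ 2) ^+ 2 - (y ^+ 2 - q ^+ 2) ^+ 2
   + ((c * x - s * y) ^+ 2 - (S * ((c * x - s * y) / r)) ^+ 2) ^+ 2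
   + ((s * x + c * y) ^+ 2 - (S * ((s * x + c * y) / r)) ^+ 2) ^+ 2
  = (D - (x ^+ 2 - p ^+ 2) ^+ 2 - (y ^+ 2 - q ^+ 2) ^+ 2
       + 3 / 4 * ((x ^+ 2 - p ^+ 2) + (y ^+ 2 - q ^+ 2)) ^+ 2)
    + (- ((x ^+ 2 - p ^+ 2) + (y ^+ 2 - q ^+ 2)) ^+ 2 / (x ^+ 2 + y ^+ 2) ^+ 2
        * ((x * y) ^+ 2 - ((x ^+ 2 - y ^+ 2) / 2) ^+ 2)) * G1 c s
    + (- ((x ^+ 2 - p ^+ 2) + (y ^+ 2 - q ^+ 2)) ^+ 2 / (x ^+ 2 + y ^+ 2) ^+ 2
        * (2 * ((x ^+ 2 - y ^+ 2) / 2) * (x * y))) * G2 c s.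
Proof.
move=> cs hr hS r0.
have xy0 : x ^+ 2 + y ^+ 2 != 0 by rewrite -hr expf_neq0.
rewrite !exprMn !exprVn hS hr.
transitivity (D - (x ^+ 2 - p ^+ 2) ^+ 2 - (y ^+ 2 - q ^+ 2) ^+ 2
  + ((x ^+ 2 - p ^+ 2) + (y ^+ 2 - q ^+ 2)) ^+ 2 / (x ^+ 2 + y ^+ 2) ^+ 2
     * ((c * x - s * y) ^+ 4 + (s * x + c * y) ^+ 4)).
  by field.
rewrite quart_id cs expr1n mulr1 /G1 /G2.
by field.
Qed.

Lemma alg_zero (D x y p q c s S c' s' : R) : c ^+ 2 + s ^+ 2 = 1 ->
  x = 0 -> y = 0 -> S ^+ 2 = p ^+ 2 + q ^+ 2 ->
  D - (x ^+ 2 - p ^+ 2) ^+ 2 - (y ^+ 2 - q ^+ 2) ^+ 2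
   + ((c' * x - s' * y) ^+ 2 - (S * c) ^+ 2) ^+ 2
   + ((s' * x + c' * y) ^+ 2 - (S * s) ^+ 2) ^+ 2
  = (D - (x ^+ 2 - p ^+ 2) ^+ 2 - (y ^+ 2 - q ^+ 2) ^+ 2
       + 3 / 4 * ((x ^+ 2 - p ^+ 2) + (y ^+ 2 - q ^+ 2)) ^+ 2)
    + ((p ^+ 2 + q ^+ 2) ^+ 2 / 4) * G1 c s + 0 * G2 c s.
Proof.
move=> cs -> -> hS.
rewrite !exprMn hS.
transitivity (D - (0 ^+ 2 - p ^+ 2) ^+ 2 - (0 ^+ 2 - q ^+ 2) ^+ 2
  + (p ^+ 2 + q ^+ 2) ^+ 2 * (c ^+ 4 + s ^+ 4)).
  by ring.
rewrite quart_id2 cs expr1n mulr1 /G1.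
by field.
Qed.
End S6.

Arguments g1 {R}. Arguments g2 {R}.
Arguments dd {R n}. Arguments d_split {R n}.
Arguments rotF_i {R n} i j. Arguments rotF_j {R n} i j. Arguments rotF_k {R n} i j.
Arguments cY_i {R n} i j. Arguments cY_j {R n} i j. Arguments cY_k {R n} i j.
Arguments rotF_sphere {R n} i j. Arguments cY_sphere {R n} i j.

Arguments alg_zero {R} D {x y p q c s S c' s'}. Arguments alg_rot {R} D {x y p q c s S r}.
Section S7.
Variable R : realType.
Variable n : nat.
Implicit Types (X Y Z W : 'I_n -> R).

Lemma avg_trig' (f : R -> \bar R) (a b c : R) :
  (forall th, f th = (a + b * g1 th + c * g2 th)%:E) -> avg_angle f = a%:E.
Proof. move=> hf; have -> : f = (fun th => (a + b * g1 th + c * g2 th)%:E) by apply/funext. exact: avg_trig. Qed.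

Definition V X Y (i j : 'I_n) : R :=
  dd X Y - (X i ^+ 2 - Y i ^+ 2) ^+ 2 - (X j ^+ 2 - Y j ^+ 2) ^+ 2
       + 3 / 4 * ((X i ^+ 2 - Y i ^+ 2) + (X j ^+ 2 - Y j ^+ 2)) ^+ 2.

Lemma step_bound (h : vecR R n -> vecR R n -> \bar R) (kk : R) X Y (i j : 'I_n) :
  i != j -> 0 <= kk ->
  (forall Z W, 0 <= h Z W)%E ->
  (forall Z W, on_sphere Z -> on_sphere W -> h Z W <= (kk * dd Z W)%:E)%E ->
  on_sphere X -> on_sphere Y ->
  (avg_angle (fun th => step_val h i j th X Y) <= (kk * V X Y i j)%:E)%E.
Proof.
move=> ij kk0 h0 hb sX sY.
have hS : Num.sqrt (Y i ^+ 2 + Y j ^+ 2) ^+ 2 = Y i ^+ 2 + Y j ^+ 2.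
  by rewrite sqr_sqrtr // addr_ge0 // sqr_ge0.
have hr : Num.sqrt (X i ^+ 2 + X j ^+ 2) ^+ 2 = X i ^+ 2 + X j ^+ 2.
  by rewrite sqr_sqrtr // addr_ge0 // sqr_ge0.
rewrite /step_val.
have [r0|r0] := eqVneq (Num.sqrt (X i ^+ 2 + X j ^+ 2)) 0.
-
  have xy0 : X i ^+ 2 + X j ^+ 2 = 0 by rewrite -hr r0 expr0n.
  have xi0 : X i = 0.
    apply/eqP; rewrite -sqrf_eq0 eq_le sqr_ge0 andbT.
    by rewrite -xy0 lerDl sqr_ge0.
  have xj0 : X j = 0.
    apply/eqP; rewrite -sqrf_eq0 eq_le sqr_ge0 andbT.
    by rewrite -xy0 lerDr sqr_ge0.
  have pt : forall th, (avg_angle (fun phi => h (rotF i j th X)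
       (coupledY i j (cos phi) (sin phi) Y)) <= (kk * V X Y i j)%:E)%E.
    move=> th.
    apply: le_trans (@avg_le R _ (fun phi => (kk * dd (rotF i j th X)
       (coupledY i j (cos phi) (sin phi) Y))%:E) _ _) _.
    + by move=> phi; exact: h0.
    + move=> phi; apply: hb; first exact: rotF_sphere.
      by apply: cY_sphere => //; exact: cos2Dsin2.
    rewrite (avg_trig' _ (kk * V X Y i j)
                (kk * ((Y i ^+ 2 + Y j ^+ 2) ^+ 2 / 4)) (0)) //.
    move=> phi; congr (_%:E).
    rewrite (d_split _ _ X Y i j ij); last first.
      by move=> k ki kj; rewrite rotF_k // cY_k.
    rewrite rotF_i // rotF_j // cY_i // cY_j //.
    rewrite (alg_zero (dd X Y) (cos2Dsin2 phi) xi0 xj0 hS) /V xi0 xj0.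
    rewrite /g1 /g2 /G1 /G2; ring.
  apply: le_trans (@avg_le R _ (fun _ => (kk * V X Y i j)%:E) _ pt) _.
    by move=> th; apply: avg_ge0 => phi; exact: h0.
  rewrite (avg_trig' _ (kk * V X Y i j) (0) (0)) //.
  by move=> th; rewrite !mul0r !addr0.
-
  set r := Num.sqrt (X i ^+ 2 + X j ^+ 2).
  apply: le_trans (@avg_le R _ (fun th => (kk * dd (rotF i j th X)
       (coupledY i j (rotF i j th X i / r) (rotF i j th X j / r) Y))%:E) _ _) _.
  + by move=> phi; exact: h0.
  + move=> th; apply: hb; first exact: rotF_sphere.
    apply: cY_sphere => //.
    rewrite rotF_i // rotF_j // !expr_div_n hr -mulrDl.
    have cs := cos2Dsin2 th.
    have e : (cos th * X i - sin th * X j) ^+ 2 + (sin th * X i + cos th * X j) ^+ 2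
        = X i ^+ 2 + X j ^+ 2 by rewrite -[RHS]mul1r -cs; ring.
    by rewrite e mulfV // -hr expf_neq0.
  rewrite (avg_trig' _ (kk * V X Y i j)
     (kk * (- ((X i ^+ 2 - Y i ^+ 2) + (X j ^+ 2 - Y j ^+ 2)) ^+ 2 / (X i ^+ 2 + X j ^+ 2) ^+ 2
        * ((X i * X j) ^+ 2 - ((X i ^+ 2 - X j ^+ 2) / 2) ^+ 2)))
     (kk * (- ((X i ^+ 2 - Y i ^+ 2) + (X j ^+ 2 - Y j ^+ 2)) ^+ 2 / (X i ^+ 2 + X j ^+ 2) ^+ 2
        * (2 * ((X i ^+ 2 - X j ^+ 2) / 2) * (X i * X j))))) //.
  move=> th; congr (_%:E).
  rewrite (d_split _ _ X Y i j ij); last first.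
    by move=> k ki kj; rewrite rotF_k // cY_k.
  rewrite cY_i // cY_j // !rotF_i // !rotF_j //.
  rewrite (alg_rot (dd X Y) (cos2Dsin2 th) hr hS r0) /V.
  rewrite /g1 /g2 /G1 /G2; ring.
Qed.
End S7.

Section S8.
Variable R : realType.
Variable n : nat.

Lemma pair_sum (w : 'I_n -> 'I_n -> R) : (forall i j, w i j = w j i) ->
  2 * \sum_(i < n) \sum_(j < n | (i < j)%N) w i j = \sum_(i < n) \sum_(j < n) w i j - \sum_(i < n) w i i.
Proof.
move=> ws.
have e1 : \sum_(i < n) \sum_(j < n) w i j = \sum_(i < n) \sum_(j < n | (i < j)%N) w i j
    + \sum_(i < n) \sum_(j < n | (j < i)%N) w i j + \sum_(i < n) w i i.
  rewrite -!big_split /=; apply: eq_bigr => i _.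
  rewrite (bigID (fun j : 'I_n => (i < j)%N)) /= -addrA; congr (_ + _).
  rewrite (bigD1 i) /= ?ltnn // addrC; congr (_ + _).
  apply: eq_bigl => j; rewrite -leqNgt.
  by rewrite ltn_neqAle andbC.
have e2 : \sum_(i < n) \sum_(j < n | (j < i)%N) w i j = \sum_(i < n) \sum_(j < n | (i < j)%N) w i j.
  under eq_bigr do rewrite big_mkcond.
  rewrite exchange_big /=; apply: eq_bigr => i _.
  rewrite [in RHS]big_mkcond; apply: eq_bigr => j _.
  by rewrite ws.
rewrite e1 e2; ring.
Qed.

End S8.

Arguments dd {R n}. Arguments V {R n}. Arguments pair_sum {R n}.

Section S9.
Variable R : realType.
Variable n : nat.
Implicit Types (X Y : 'I_n -> R).

Definition aa X Y k : R := X k ^+ 2 - Y k ^+ 2.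
Definition ww (p q : R) := - p ^+ 2 - q ^+ 2 + 3 / 4 * (p + q) ^+ 2.

Lemma sum_aa X Y : on_sphere X -> on_sphere Y -> \sum_(k < n) aa X Y k = 0.
Proof. by move=> sX sY; rewrite /aa sumrB sX sY subrr. Qed.

Lemma sum_const1 : \sum_(j < n) (1 : R) = n%:R.
Proof. by rewrite sumr_const card_ord. Qed.

Lemma Cp_val : 2 * \sum_(i < n) \sum_(j < n | (i < j)%N) (1 : R) = n%:R * n%:R - n%:R.
Proof.
rewrite (pair_sum (fun _ _ => 1)) //.
by rewrite sum_const1 (eq_bigr (fun _ => n%:R)) ?sumr_const ?card_ord ?mulr_natl // => i _; rewrite sum_const1.
Qed.

Lemma sumV X Y : on_sphere X -> on_sphere Y ->
  \sum_(i < n) \sum_(j < n | (i < j)%N) V X Y i j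
  = (\sum_(i < n) \sum_(j < n | (i < j)%N) (1 : R)) * dd X Y - (n%:R + 2) / 4 * dd X Y.
Proof.
move=> sX sY.
have hV i j : V X Y i j = dd X Y * 1 + ww (aa X Y i) (aa X Y j).
  by rewrite /V /ww /aa; field; try done.
under eq_bigr do under eq_bigr do rewrite hV.
under eq_bigr do rewrite big_split /= -mulr_sumr.
rewrite big_split /= -mulr_sumr.
have sa := @sum_aa X Y sX sY : \sum_(k < n) aa X Y k = 0.
have ddE : dd X Y = \sum_(k < n) aa X Y k ^+ 2 by [].
have inner i : \sum_(j < n) ww (aa X Y i) (aa X Y j)
    = - (n%:R / 4) * aa X Y i ^+ 2 - dd X Y / 4.
  rewrite (eq_bigr (fun j => ((- (1 / 4)) * aa X Y i ^+ 2 + (- (1 / 4)) * aa X Y j ^+ 2)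
                 + (3 / 2 * aa X Y i) * aa X Y j)); last by move=> j _; rewrite /ww; field; try done.
  rewrite big_split /= -mulr_sumr sa mulr0 addr0 big_split /= -!mulr_sumr -ddE.
  by rewrite sumr_const card_ord -mulr_natl; field; try done.
have Sw : 2 * \sum_(i < n) \sum_(j < n | (i < j)%N) ww (aa X Y i) (aa X Y j)
    = - (n%:R / 2) * dd X Y - dd X Y.
  rewrite pair_sum; last by move=> i j; rewrite /ww; field; try done.
  under eq_bigr do rewrite inner.
  rewrite big_split /= -mulr_sumr -ddE sumr_const card_ord.
  rewrite (eq_bigr (fun i => aa X Y i ^+ 2)); last by move=> i _; rewrite /ww; field; try done.
  rewrite -ddE -mulr_natl. field; try done.
have Sw2 : \sum_(i < n) \sum_(j < n | (i < j)%N) ww (aa X Y i) (aa X Y j)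
    = (- (n%:R / 2) * dd X Y - dd X Y) / 2.
  rewrite -Sw; field; try done.
rewrite Sw2; field; try done.
Qed.
End S9.

Arguments dd {R n}. Arguments V {R n}. Arguments pair_sum {R n}.
Arguments sumV {R n}. Arguments Cp_val {R n}. Arguments step_bound {R n}.

Section S10.
Variable R : realType.
Variable n : nat.
Implicit Types (X Y : 'I_n -> R).

Lemma dd_ge0 X Y : 0 <= dd X Y.
Proof. by apply: sumr_ge0 => k _; exact: sqr_ge0. Qed.

Lemma sq_le1 (X : 'I_n -> R) (k : 'I_n) : on_sphere X -> X k ^+ 2 <= 1.
Proof.
move=> sX; rewrite -sX (bigD1 k) //= lerDl.
by apply: sumr_ge0 => l _; exact: sqr_ge0.
Qed.

Lemma dd_le2 X Y : on_sphere X -> on_sphere Y -> dd X Y <= 2.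
Proof.
move=> sX sY; apply: (@le_trans _ _ (\sum_(k < n) (X k ^+ 2 + Y k ^+ 2))).
  apply: ler_sum => k _.
  have h1 := @sq_le1 X k sX; have h2 := @sq_le1 Y k sY.
  have h3 := sqr_ge0 (X k); have h4 := sqr_ge0 (Y k).
  nra.
by rewrite big_split /= sX sY.
Qed.

Lemma C_val : (2 <= n)%N -> 2 * ('C(n, 2))%:R = n%:R * n%:R - n%:R :> R.
Proof.
move=> n2; have := mul_bin_diag n 1; rewrite bin1 => e.
have e' : (2 * 'C(n, 2))%N = (n * n.-1)%N by rewrite e.
rewrite -natrM e' natrM -subn1 natrB; last by apply: leq_trans n2.
by rewrite mulrBr mulr1.
Qed.

Lemma K_bound (h : vecR R n -> vecR R n -> \bar R) (kk : R) X Y :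
  (2 <= n)%N -> 0 <= kk ->
  (forall Z W, 0 <= h Z W)%E ->
  (forall Z W, on_sphere Z -> on_sphere W -> h Z W <= (kk * dd Z W)%:E)%E ->
  on_sphere X -> on_sphere Y ->
  (coupling_op h X Y <= (kk * (1 - (2 * n%:R)^-1) * dd X Y)%:E)%E.
Proof.
move=> n2 kk0 h0 hb sX sY.
have N2 : (2 : R) <= n%:R by rewrite (ler_nat R 2 n).
have Cpos : (0 : R) < ('C(n, 2))%:R.
  have := C_val n2; have : (0 : R) < n%:R * n%:R - n%:R by nra.
  move=> h1 h2; nra.
rewrite /coupling_op.
apply: (@le_trans _ _ ((('C(n, 2))%:R^-1)%:E *
   \sum_(i < n) \sum_(j < n | (i < j)%N) (kk * V X Y i j)%:E))%E.
  apply: lee_wpmul2l; first by rewrite lee_fin invr_ge0 ltW.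
  apply: lee_sum => i _; apply: lee_sum => j ij.
  apply: step_bound => //.
  by rewrite neq_ltn ij.
under eq_bigr do rewrite sumEFin.
rewrite sumEFin -EFinM lee_fin.
under eq_bigr do rewrite -mulr_sumr.
rewrite -mulr_sumr sumV //.
have hCp := @Cp_val R n.
set Cp := \sum_(i < n) \sum_(j < n | (i < j)%N) (1 : R) in hCp *.
have hC := C_val n2.
set C := ('C(n, 2))%:R in hC Cpos *.
have eC : C = (n%:R * n%:R - n%:R) / 2 by rewrite -hC; field; try done.
have eCp : Cp = (n%:R * n%:R - n%:R) / 2 by rewrite -hCp; field; try done.
rewrite eC eCp.
set N : R := n%:R in N2 eC eCp *.
set d := dd X Y.
have d0 : 0 <= d := dd_ge0 X Y.
rewrite -subr_ge0.
have N0 : N != 0 by apply/negP => /eqP N0; rewrite N0 in N2; lra.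
have N1 : N - 1 != 0 by apply/negP => /eqP N1; lra.
have NN : N * N - N != 0 by rewrite (_ : N * N - N = N * (N - 1)); [rewrite mulf_neq0 | ring].
have -> : kk * (1 - (2 * N)^-1) * d - ((N * N - N) / 2)^-1 * (kk * ((N * N - N) / 2 * d - (N + 2) / 4 * d))
    = kk * d * 3 / (2 * N * (N - 1)).
  by field; rewrite ?N0 ?N1 ?NN.
apply: divr_ge0; first by rewrite !mulr_ge0.
apply: mulr_ge0; last lra.
lra.
Qed.
End S10.

Arguments dd {R n}. Arguments K_bound {R n}. Arguments dd_ge0 {R n}. Arguments dd_le2 {R n}.

Theorem lemma3p3 (R : realType) (n : nat) (X0 Y0 : 'I_n -> R) :
  (2 <= n)%N -> on_sphere X0 -> on_sphere Y0 ->
  forall t : nat,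
    (coupled_expect t (@sqdist R n) X0 Y0 <= (2 * (1 - (2 * n%:R)^-1) ^+ t)%:E)%E.
Proof.
move=> n2 sX0 sY0 t.
set c : R := 1 - (2 * n%:R)^-1.
have N2 : (2 : R) <= n%:R by rewrite (ler_nat R 2 n).
have c0 : 0 <= c.
  rewrite /c subr_ge0 invf_le1; last lra.
  lra.
have main : forall t,
  (forall Z W, 0 <= iter t (@coupling_op R n) (@sqdist R n) Z W)%E /\
  (forall Z W, on_sphere Z -> on_sphere W ->
     iter t (@coupling_op R n) (@sqdist R n) Z W <= (c ^+ t * dd Z W)%:E)%E.
  elim=> [|k [IH0 IHb]].
    split=> Z W /=; first by have := dd_ge0 Z W; rewrite -lee_fin.
    by move=> _ _; rewrite expr0 mul1r.
  split=> Z W /=.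
    rewrite /coupling_op mule_ge0 //.
    apply: (big_ind (fun x : \bar R => (0 <= x)%E)) => // [x y|i _]; first exact: adde_ge0.
    apply: (big_ind (fun x : \bar R => (0 <= x)%E)) => // [x y|j _]; first exact: adde_ge0.
    apply: avg_ge0 => th; rewrite /step_val /=; case: ifP => _ //.
    by apply: avg_ge0.
  move=> sZ sW.
  rewrite exprSr.
  apply: K_bound => //; exact: exprn_ge0.
have [_ hb] := main t.
rewrite /coupled_expect.
apply: le_trans (hb _ _ sX0 sY0) _.
rewrite lee_fin mulrC ler_wpM2r //; first exact: exprn_ge0.
exact: dd_le2.
Qed.
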